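(* Let $D,D'$ be torus invariant Weil divisors on the cyclic quotient singularity $X$, and let $K=-[\rho^0]-[\rho^1]$ be the canonical divisor (so $\mathrm{vert}(K)=[1,\tfrac{q+1}{n}]$). Define \[ \mathrm{below}(D)=\mathrm{int}(P_D)\setminus\bigcup_{u\in G(D)}(u+\mathrm{int}\,\sigma^\vee),\quad \mathrm{abelow}(D)=P_D\setminus\bigcup_{u\in G(D)}(u+\sigma^\vee), \] \[ \mathrm{link}(D)=\mathrm{below}(D)\cap\big[\overline{\mathrm{below}(D)}+\mathrm{vert}(K)\big]. \] Then: (1) $\mathrm{link}(D)=\overline{\mathrm{abelow}(D)}\cap\big[\mathrm{abelow}(D)+\mathrm{vert}(K)\big]$; (2) $\big[\mathrm{below}(D)+\mathrm{vert}(D')\big]\cap M=\big[\mathrm{link}(D)+\mathrm{vert}(D')\big]\cap M$; (3) $\big[\mathrm{abelow}(D)+\mathrm{vert}(D')\big]\cap M=\big[\mathrm{link}(D)+\mathrm{vert}(D')-\mathrm{vert}(K)\big]\cap M$.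
   Context: Fix coprime integers $0<q<n$. Let $M=\mathbb Z^2$, $M_{\mathbb Q}=\mathbb Q^2$ (topology induced from $\mathbb R^2$; $\mathrm{int}$ is interior and $\overline{\,\cdot\,}$ is closure), with the standard scalar product $\langle\cdot,\cdot\rangle$. Put $\rho^0=(1,0)$, $\rho^1=(-q,n)$, $\sigma^\vee=\{u\in M_{\mathbb Q}:\langle u,\rho^0\rangle\ge 0,\ \langle u,\rho^1\rangle\ge 0\}$, $R=\mathbb C[\sigma^\vee\cap M]$, $X=\mathrm{Spec}\,R$. A torus invariant Weil divisor is $D=a_0[\rho^0]+a_1[\rho^1]$, $a_i\in\mathbb Z$, with section polyhedron $P_D=\{u\in M_{\mathbb Q}:\langle u,\rho^i\rangle\ge -a_i,\ i=0,1\}=\mathrm{vert}(D)+\sigma^\vee$ for a unique $\mathrm{vert}(D)\in\mathbb Q^2$. $G(D)$ is the set of lattice points $u\in M$ lying on compact edges of $\mathrm{conv}(P_D\cap M)$. Sums of a set and a vector are Minkowski translates. *)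

(* Defs.v *)
From mathcomp Require Import all_boot all_order all_algebra.
Set Implicit Arguments. Unset Strict Implicit. Unset Printing Implicit Defensive.
Import Order.TTheory GRing.Theory Num.Theory.
Local Open Scope ring_scope.

Definition pt := (rat * rat)%type.
Definition pset := pt -> Prop.

Definition dot (u v : pt) : rat := u.1 * v.1 + u.2 * v.2.
Definition padd (u v : pt) : pt := (u.1 + v.1, u.2 + v.2).
Definition psub (u v : pt) : pt := (u.1 - v.1, u.2 - v.2).

Definition inM (u : pt) : Prop := (u.1 \is a Num.int) /\ (u.2 \is a Num.int).

Definition rho0 : pt := (1, 0).
Definition rho1 (q n : nat) : pt := (- (q%:R), n%:R).

Definition sigmav (q n : nat) : pset :=
  fun u => 0 <= dot u rho0 /\ 0 <= dot u (rho1 q n).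

(* torus invariant Weil divisor D = a0 [rho0] + a1 [rho1], encoded as (a0, a1) *)
Definition divisor := (int * int)%type.

Definition canK : divisor := (-1, -1)%R.

Definition PD (q n : nat) (D : divisor) : pset :=
  fun u => - (D.1%:~R) <= dot u rho0 /\ - (D.2%:~R) <= dot u (rho1 q n).

(* vert(D): the unique point u with <u, rho^i> = -a_i (i = 0, 1) *)
Definition vert (q n : nat) (D : divisor) : pt :=
  (- (D.1%:~R), (- (D.2%:~R) - q%:R * D.1%:~R) / n%:R).

Definition translate (A : pset) (v : pt) : pset := fun x => A (psub x v).

(* topology on Q^2 induced from R^2 (sup-norm balls with rational radii) *)
Definition intr (A : pset) : pset :=
  fun x => A x /\ exists e : rat, 0 < e /\
    forall y : pt, `|y.1 - x.1| < e -> `|y.2 - x.2| < e -> A y.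
Definition clos (A : pset) : pset :=
  fun x => forall e : rat, 0 < e ->
    exists y : pt, A y /\ `|y.1 - x.1| < e /\ `|y.2 - x.2| < e.

Definition conv (A : pset) : pset :=
  fun x => exists s : seq (rat * pt),
    (forall c, c \in s -> 0 <= c.1 /\ A c.2) /\
    \sum_(c <- s) c.1 = 1 /\
    x = (\sum_(c <- s) c.1 * c.2.1, \sum_(c <- s) c.1 * c.2.2).

Definition face_of (C : pset) (w : pt) : pset :=
  fun x => C x /\ forall y, C y -> dot w x <= dot w y.

Definition compact_edge (C F : pset) : Prop :=
  (exists w : pt, forall x, F x <-> face_of C w x) /\
  (exists x y : pt, F x /\ F y /\ x <> y) /\
  (exists (p d : pt), d <> (0, 0) /\
      forall x, F x -> exists t : rat, x = padd p (t * d.1, t * d.2)) /\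
  (exists R : rat, forall x, F x -> `|x.1| <= R /\ `|x.2| <= R).

Definition GD (q n : nat) (D : divisor) : pset :=
  fun u => inM u /\ exists F : pset,
    compact_edge (conv (fun x => PD q n D x /\ inM x)) F /\ F u.

Definition below (q n : nat) (D : divisor) : pset :=
  fun x => intr (PD q n D) x /\
    ~ (exists u, GD q n D u /\ translate (intr (sigmav q n)) u x).

Definition abelow (q n : nat) (D : divisor) : pset :=
  fun x => PD q n D x /\
    ~ (exists u, GD q n D u /\ translate (sigmav q n) u x).

Definition link (q n : nat) (D : divisor) : pset :=
  fun x => below q n D x /\
    translate (clos (below q n D)) (vert q n canK) x.

(* Main.v *)
Require Import Defs.
From mathcomp Require Import all_boot all_order all_algebra.
From mathcomp Require Import ring lra.
Import Order.TTheory GRing.Theory Num.Theory.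
Local Open Scope ring_scope.

Lemma int_lt1 (x y : rat) : x \is a Num.int -> y \is a Num.int -> x < y -> x + 1 <= y.
Proof.
move=> /intrP[a ->] /intrP[b ->]; rewrite ltr_int => h.
have -> : a%:~R + 1 = (a + 1)%:~R :> rat by rewrite rmorphD.
by rewrite ler_int lezD1.
Qed.

Lemma int_gap (P u : rat) : u \is a Num.int -> P < u ->
  P < (Num.floor P + 1)%:~R /\ (Num.floor P + 1)%:~R <= u.
Proof.
move=> /intrP[m ->] h; split; first exact: floorD1_gt.
by rewrite ler_int lezD1 floor_lt_int.
Qed.

Lemma dist_bound (r x y : pt) (e : rat) :
  `|y.1 - x.1| < e -> `|y.2 - x.2| < e ->
  `|dot y r - dot x r| <= (`|r.1| + `|r.2|) * e.
Proof.
move=> h1 h2.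
have -> : dot y r - dot x r = (y.1 - x.1) * r.1 + (y.2 - x.2) * r.2 by rewrite /dot; ring.
apply: le_trans (ler_normD _ _) _.
rewrite !normrM mulrDl.
apply: lerD; rewrite mulrC; apply: ler_wpM2l => //; exact: ltW.
Qed.

Lemma dot_psub x v r : dot (psub x v) r = dot x r - dot v r.
Proof. rewrite /dot /psub /=; ring. Qed.

Lemma dot_dir (x v r : pt) t : dot (x.1 + t * v.1, x.2 + t * v.2) r = dot x r + t * dot v r.
Proof. rewrite /dot /=; ring. Qed.

Section Main.
Variables (q n : nat).
Hypothesis hn : (0 < n)%N.

Let L0 (x : pt) := dot x rho0.
Let L1 (x : pt) := dot x (rho1 q n).
Let K : rat := (q + n)%:R.

Lemma K_ge1 : 1 <= K.
Proof. rewrite /K ler1n; rewrite addn_gt0 hn orbT //. Qed.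

Lemma n_gt0 : 0 < n%:R :> rat.
Proof. by rewrite ltr0n. Qed.

Lemma near0 x y e : `|y.1 - x.1| < e -> `|y.2 - x.2| < e -> `|L0 y - L0 x| <= K * e.
Proof.
move=> h1 h2; have := @dist_bound rho0 x y e h1 h2.
have he : 0 <= e by apply: le_trans (normr_ge0 _) (ltW h1).
rewrite /rho0 /= normr1 normr0 addr0 mul1r => h.
apply: le_trans h _; rewrite -{1}(mul1r e); apply: ler_wpM2r => //; exact: K_ge1.
Qed.

Lemma near1 x y e : `|y.1 - x.1| < e -> `|y.2 - x.2| < e -> `|L1 y - L1 x| <= K * e.
Proof.
move=> h1 h2; have := @dist_bound (rho1 q n) x y e h1 h2.
by rewrite /rho1 /= normrN !normr_nat -natrD.
Qed.

Lemma L0_dir x v t : L0 (x.1 + t * v.1, x.2 + t * v.2) = L0 x + t * L0 v.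
Proof. exact: dot_dir. Qed.
Lemma L1_dir x v t : L1 (x.1 + t * v.1, x.2 + t * v.2) = L1 x + t * L1 v.
Proof. exact: dot_dir. Qed.

Lemma intr_quad (A : pset) b0 b1 :
  (forall y, A y <-> b0 <= L0 y /\ b1 <= L1 y) ->
  forall x, Defs.intr A x <-> b0 < L0 x /\ b1 < L1 x.
Proof.
move=> hA x; split.
  move=> [_ [e [he hb]]].
  have he2 : 0 < e / 2 by rewrite divr_gt0.
  have he2e : e / 2 < e by rewrite ltr_pdivrMr // ltr_pMr // ltr1n.
  have hn0 := n_gt0.
  split.
  - have n1 : `|(x.1 - e / 2) - x.1| < e by rewrite addrAC subrr add0r normrN gtr0_norm.
    have n2 : `|x.2 - x.2| < e by rewrite subrr normr0.
    have /hA [h _] := hb (x.1 - e / 2, x.2) n1 n2.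
    move: h; rewrite /L0 /dot /rho0 /= => h; rewrite /L0 /dot /=; lra.
  - have n1 : `|(x.2 - e / 2) - x.2| < e by rewrite addrAC subrr add0r normrN gtr0_norm.
    have n2 : `|x.1 - x.1| < e by rewrite subrr normr0.
    have /hA [_ h] := hb (x.1, x.2 - e / 2) n2 n1.
    move: h; rewrite /L1 /dot /rho1 /= => h; rewrite /L1 /dot /=.
    have : 0 < n%:R * (e / 2) by rewrite mulr_gt0.
    lra.
move=> [h0 h1]; split; first by apply/hA; split; apply: ltW.
set m := Num.min (L0 x - b0) (L1 x - b1).
have hm0 : m <= L0 x - b0 by rewrite /m ge_min lexx.
have hm1 : m <= L1 x - b1 by rewrite /m ge_min lexx orbT.
have hm : 0 < m by rewrite /m lt_min !subr_gt0 h0 h1.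
have hK := K_ge1.
have hK0 : 0 < K by lra.
exists (m / (2 * K)); split; first by rewrite divr_gt0 // mulr_gt0.
have hKe : K * (m / (2 * K)) = m / 2 by field; lra.
move=> y hy1 hy2; apply/hA.
have := near0 _ _ _ hy1 hy2; have := near1 _ _ _ hy1 hy2; rewrite hKe.
rewrite !ler_norml => /andP[a1 _] /andP[a0 _].
have : 0 < m / 2 by rewrite divr_gt0.
split; lra.
Qed.


Lemma L0_psub x v : L0 (psub x v) = L0 x - L0 v. Proof. exact: dot_psub. Qed.
Lemma L1_psub x v : L1 (psub x v) = L1 x - L1 v. Proof. exact: dot_psub. Qed.
Lemma L0_00 : L0 (0, 0) = 0. Proof. by rewrite /L0 /dot /= !mul0r addr0. Qed.
Lemma L1_00 : L1 (0, 0) = 0. Proof. by rewrite /L1 /dot /= !mul0r addr0. Qed.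
Lemma L0_K : L0 (vert q n canK) = 1.
Proof. by rewrite /L0 /dot /vert /canK /= mulr1 mulr0 addr0 opprK. Qed.
Lemma L1_K : L1 (vert q n canK) = 1.
Proof. have := n_gt0; rewrite /L1 /dot /vert /canK /rho1 /= => hn0. field; lra. Qed.
Lemma L0_vert D : L0 (vert q n D) = - D.1%:~R.
Proof. by rewrite /L0 /dot /vert /= mulr1 mulr0 addr0. Qed.
Lemma L1_vert D : L1 (vert q n D) = - D.2%:~R.
Proof. have := n_gt0; rewrite /L1 /dot /vert /rho1 /= => hn0. field; lra. Qed.

Lemma int_cast (z : int) : (z%:~R : rat) \is a Num.int.
Proof. by apply/intrP; exists z. Qed.

Lemma int_castN (z : int) : (- (z%:~R) : rat) \is a Num.int.
Proof. by apply/intrP; exists (- z); rewrite rmorphN. Qed.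

Lemma inM_int x : inM x -> L0 x \is a Num.int /\ L1 x \is a Num.int.
Proof.
move=> [h1 h2]; rewrite /L0 /L1 /dot /rho0 /rho1 /=; split.
  by rewrite rpredD ?rpredM ?rpred1 ?rpred0.
by rewrite rpredD ?rpredM ?rpredN ?natr_int.
Qed.

Lemma clos_ge (f : pt -> rat) :
  (forall x y e, `|y.1 - x.1| < e -> `|y.2 - x.2| < e -> `|f y - f x| <= K * e) ->
  forall (A : pset) p b, clos A p -> (forall y, A y -> b <= f y) -> b <= f p.
Proof.
move=> hf A p b hc hA; rewrite leNgt; apply/negP => hlt.
have hK := K_ge1.
have hK0 : 0 < K by lra.
have hd : 0 < b - f p by rewrite subr_gt0.
have [y [Ay [hy1 hy2]]] := hc ((b - f p) / (2 * K)) (divr_gt0 hd (mulr_gt0 (ltr0Sn _ 1) hK0)).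
have := hf _ _ _ hy1 hy2.
have hKe : K * ((b - f p) / (2 * K)) = (b - f p) / 2 by field; lra.
rewrite hKe ler_norml => /andP[_ h]; have := hA _ Ay; lra.
Qed.

Lemma clos_gt_ex (A : pset) p b0 b1 : clos A p -> b0 < L0 p -> b1 < L1 p ->
  exists y, A y /\ b0 < L0 y /\ b1 < L1 y.
Proof.
move=> hc h0 h1.
set m := Num.min (L0 p - b0) (L1 p - b1).
have hm0 : m <= L0 p - b0 by rewrite /m ge_min lexx.
have hm1 : m <= L1 p - b1 by rewrite /m ge_min lexx orbT.
have hm : 0 < m by rewrite /m lt_min !subr_gt0 h0 h1.
have hK := K_ge1.
have hK0 : 0 < K by lra.
have hKe : K * (m / (2 * K)) = m / 2 by field; lra.
have [y [Ay [hy1 hy2]]] := hc (m / (2 * K)) (divr_gt0 hm (mulr_gt0 (ltr0Sn _ 1) hK0)).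
exists y; split => //.
have := near0 _ _ _ hy1 hy2; have := near1 _ _ _ hy1 hy2; rewrite hKe.
rewrite !ler_norml => /andP[a1 _] /andP[a0 _].
have : 0 < m / 2 by rewrite divr_gt0.
split; lra.
Qed.

Lemma clos_dir (A : pset) (p v : pt) (d : rat) : 0 < d ->
  (forall t, 0 < t -> t < d -> A (p.1 + t * v.1, p.2 + t * v.2)) -> clos A p.
Proof.
move=> hd hA e he.
set m := Num.min e d.
have hme : m <= e by rewrite /m ge_min lexx.
have hmd : m <= d by rewrite /m ge_min lexx orbT.
have hm : 0 < m by rewrite /m lt_min he hd.
set S := `|v.1| + `|v.2| + 2.
have hS : 2 <= S by rewrite /S; have := normr_ge0 v.1; have := normr_ge0 v.2; lra.
have hS0 : 0 < S by lra.
set t := m / S.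
have ht : 0 < t by rewrite divr_gt0.
have htS : t * `|v.1| + t * `|v.2| + 2 * t = m by move: hS0; rewrite /t /S => hS0; field; lra.
have a1 : 0 <= t * `|v.1| by rewrite mulr_ge0 // ltW.
have a2 : 0 <= t * `|v.2| by rewrite mulr_ge0 // ltW.
exists (p.1 + t * v.1, p.2 + t * v.2); split; first by apply: hA; lra.
rewrite /= !(addrC p.1, addrC p.2) !addrK !(normrM t) (gtr0_norm ht); split; lra.
Qed.

Section D.
Variable D : divisor.

Lemma below_iff x : below q n D x <->
  ((- D.1%:~R < L0 x /\ - D.2%:~R < L1 x) /\
   forall u, GD q n D u -> ~ (L0 u < L0 x /\ L1 u < L1 x)).
Proof.
have hP := @intr_quad (PD q n D) (- D.1%:~R) (- D.2%:~R) (fun y => iff_refl _).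
have hS : forall u, Defs.intr (sigmav q n) (psub x u) <-> (L0 u < L0 x /\ L1 u < L1 x).
  move=> u; rewrite (@intr_quad (sigmav q n) 0 0 (fun y => iff_refl _)).
  by rewrite L0_psub L1_psub !subr_gt0.
rewrite /below hP; split.
  move=> [h1 h2]; split => // u hu hl; apply: h2; exists u; split => //.
  by rewrite /translate hS.
move=> [h1 h2]; split => // [[u [hu hl]]]; apply: (h2 u hu).
by move: hl; rewrite /translate hS.
Qed.

Lemma abelow_iff x : abelow q n D x <->
  ((- D.1%:~R <= L0 x /\ - D.2%:~R <= L1 x) /\
   forall u, GD q n D u -> ~ (L0 u <= L0 x /\ L1 u <= L1 x)).
Proof.
have hS : forall u, sigmav q n (psub x u) <-> (L0 u <= L0 x /\ L1 u <= L1 x).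
  move=> u; rewrite /sigmav.
  by rewrite -/(L0 (psub x u)) -/(L1 (psub x u)) L0_psub L1_psub !subr_ge0.
rewrite /abelow; split.
  move=> [h1 h2]; split => // u hu hl; apply: h2; exists u; split => //.
  by rewrite /translate hS.
move=> [h1 h2]; split => // [[u [hu hl]]]; apply: (h2 u hu).
by move: hl; rewrite /translate hS.
Qed.

Lemma GD_int u : GD q n D u -> L0 u \is a Num.int /\ L1 u \is a Num.int.
Proof. by move=> [h _]; apply: inM_int. Qed.


Let vK := vert q n canK.

Lemma part1 x : link q n D x <->
     (clos (abelow q n D) x /\ translate (abelow q n D) vK x).
Proof.
split.
- move=> [hb hc]; have [[g0 g1] hg] := (below_iff x).1 hb.
  split.
  + set d := Num.min (L0 x + D.1%:~R) (L1 x + D.2%:~R).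
    have hd0 : d <= L0 x + D.1%:~R by rewrite /d ge_min lexx.
    have hd1 : d <= L1 x + D.2%:~R by rewrite /d ge_min lexx orbT.
    have hd : 0 < d by rewrite /d lt_min; apply/andP; split; lra.
    apply: (@clos_dir _ x (psub (0, 0) vK) d hd) => t ht htd.
    apply/abelow_iff.
    rewrite L0_dir L1_dir L0_psub L1_psub L0_00 L1_00 /vK L0_K L1_K.
    split; first by split; lra.
    move=> u hu [h0 h1]; apply: (hg u hu); split; lra.
  + rewrite /translate; apply/abelow_iff.
    rewrite L0_psub L1_psub /vK L0_K L1_K.
    have c0 := @clos_ge L0 near0 _ _ (- D.1%:~R) hc.
    have c1 := @clos_ge L1 near1 _ _ (- D.2%:~R) hc.
    rewrite L0_psub /vK L0_K in c0; rewrite L1_psub /vK L1_K in c1.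
    split.
      split; [apply: c0 | apply: c1] => y /below_iff [[y0 y1] _]; exact: ltW.
    move=> u hu [h0 h1]; apply: (hg u hu); split; lra.
- move=> [hc ha]; move: ha; rewrite /translate => /abelow_iff [[f0 f1] hf].
  move: f0 f1 hf; rewrite L0_psub L1_psub /vK L0_K L1_K => f0 f1 hf.
  split.
  + apply/below_iff; split; first by split; lra.
    move=> u hu [h0 h1].
    have [y [ay [y0 y1]]] := clos_gt_ex _ _ _ _ hc h0 h1.
    have [_ hy] := (abelow_iff y).1 ay.
    by apply: (hy u hu); split; apply: ltW.
  + rewrite /translate.
    set P0 := L0 x - 1; set P1 := L1 x - 1.
    set d := Num.min ((Num.floor P0 + 1)%:~R - P0) ((Num.floor P1 + 1)%:~R - P1).
    have hd0 : d <= (Num.floor P0 + 1)%:~R - P0 by rewrite /d ge_min lexx.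
    have hd1 : d <= (Num.floor P1 + 1)%:~R - P1 by rewrite /d ge_min lexx orbT.
    have hd : 0 < d by rewrite /d lt_min !subr_gt0 !floorD1_gt.
    apply: (@clos_dir _ _ vK d hd) => t ht htd.
    apply/below_iff.
    rewrite L0_dir L1_dir L0_psub L1_psub /vK L0_K L1_K -/P0 -/P1 !mulr1.
    split; first by rewrite /P0 /P1; split; lra.
    move=> u hu [h0 h1].
    have [i0 i1] := GD_int _ hu.
    have [e0|e0] := lerP (L0 u) P0.
      have [e1|e1] := lerP (L1 u) P1; first by apply: (hf u hu); split.
      have [_ g] := int_gap _ _ i1 e1; lra.
    have [_ g] := int_gap _ _ i0 e0; lra.
Qed.

Variable D' : divisor.

Lemma vert_int x : inM x ->
  L0 (psub x (vert q n D')) \is a Num.int /\ L1 (psub x (vert q n D')) \is a Num.int.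
Proof.
move=> /inM_int [h0 h1]; rewrite L0_psub L1_psub L0_vert L1_vert !opprK.
by split; apply: rpredD => //; apply: int_cast.
Qed.

Lemma part2 x :
     (translate (below q n D) (vert q n D') x /\ inM x) <->
     (translate (link q n D) (vert q n D') x /\ inM x).
Proof.
split; last by move=> [[h _] hx].
move=> [hb hx]; split => //; split => //.
have [i0 i1] := vert_int _ hx.
move: hb i0 i1; rewrite /translate; set y := psub x (vert q n D') => hb i0 i1.
have [[g0 g1] hg] := (below_iff y).1 hb.
have a0 := int_lt1 _ _ (int_castN D.1) i0 g0.
have a1 := int_lt1 _ _ (int_castN D.2) i1 g1.
apply: (@clos_dir _ _ vK 1 ltr01) => t ht htd.
apply/below_iff.
rewrite L0_dir L1_dir L0_psub L1_psub /vK L0_K L1_K !mulr1.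
split; first by split; lra.
move=> u hu [h0 h1]; apply: (hg u hu); split; lra.
Qed.

Lemma part3 x :
     (translate (abelow q n D) (vert q n D') x /\ inM x) <->
     (translate (translate (link q n D) (vert q n D'))
                (psub (0, 0) (vert q n canK)) x /\ inM x).
Proof.
rewrite /translate.
have E0 : L0 (psub (psub x (psub (0, 0) vK)) (vert q n D')) = L0 (psub x (vert q n D')) + 1.
  by rewrite !L0_psub L0_00 /vK L0_K; ring.
have E1 : L1 (psub (psub x (psub (0, 0) vK)) (vert q n D')) = L1 (psub x (vert q n D')) + 1.
  by rewrite !L1_psub L1_00 /vK L1_K; ring.
rewrite -/vK.
move: E0 E1.
set z := psub (psub x (psub (0, 0) vK)) (vert q n D').
set y := psub x (vert q n D') => E0 E1.
split.
- move=> [ha hx]; split => //.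
  have [i0 i1] := vert_int _ hx; rewrite -/y in i0 i1.
  have [[g0 g1] hg] := (abelow_iff y).1 ha.
  have j0 : L0 y + 1 \is a Num.int by rewrite rpredD.
  have j1 : L1 y + 1 \is a Num.int by rewrite rpredD.
  split.
    apply/below_iff; rewrite E0 E1; split; first by split; lra.
    move=> u hu [h0 h1]; have [k0 k1] := GD_int _ hu.
    have := int_lt1 _ _ k0 j0 h0; have := int_lt1 _ _ k1 j1 h1.
    move=> l1 l0; apply: (hg u hu); split; lra.
  apply: (@clos_dir _ _ vK 1 ltr01) => t ht htd.
  apply/below_iff.
  rewrite L0_dir L1_dir L0_psub L1_psub E0 E1 /vK L0_K L1_K !mulr1.
  split; first by split; lra.
  move=> u hu [h0 h1]; have [k0 k1] := GD_int _ hu.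
  have l0 : L0 u < L0 y + 1 by lra.
  have l1 : L1 u < L1 y + 1 by lra.
  have := int_lt1 _ _ k0 j0 l0; have := int_lt1 _ _ k1 j1 l1.
  move=> m1 m0; apply: (hg u hu); split; lra.
- move=> [[hb _] hx]; split => //.
  have [i0 i1] := vert_int _ hx; rewrite -/y in i0 i1.
  have [[g0 g1] hg] := (below_iff z).1 hb.
  rewrite E0 E1 in g0 g1 hg.
  have j0 : L0 y + 1 \is a Num.int by rewrite rpredD.
  have j1 : L1 y + 1 \is a Num.int by rewrite rpredD.
  have a0 := int_lt1 _ _ (int_castN D.1) j0 g0.
  have a1 := int_lt1 _ _ (int_castN D.2) j1 g1.
  apply/abelow_iff; split; first by split; lra.
  move=> u hu [h0 h1]; apply: (hg u hu); split; lra.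
Qed.

End D.
End Main.

Theorem mainTheorem8 (q n : nat) (D D' : divisor) :
  (0 < q)%N -> (q < n)%N -> coprime q n ->
  (* (1) *)
  (forall x : pt, link q n D x <->
     (clos (abelow q n D) x /\
      translate (abelow q n D) (vert q n canK) x)) /\
  (* (2) *)
  (forall x : pt,
     (translate (below q n D) (vert q n D') x /\ inM x) <->
     (translate (link q n D) (vert q n D') x /\ inM x)) /\
  (* (3) *)
  (forall x : pt,
     (translate (abelow q n D) (vert q n D') x /\ inM x) <->
     (translate (translate (link q n D) (vert q n D'))
                (psub (0, 0) (vert q n canK)) x /\ inM x)).
Proof.
move=> hq hqn _.
have hn : (0 < n)%N by apply: leq_ltn_trans hqn.
split; first exact: part1.
split; [exact: part2 | exact: part3].
Qed.
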